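(* Let $\sigma$ be a finite simplex whose vertices are linearly ordered by $\le$, let $Y$ be a topological space, and let $\Phi,\Psi:\sigma\rightrightarrows Y$ be mappings (to nonempty subsets) such that for each $v\in\sigma$, $\Phi(v)$ is contractible in $\Psi(v)$, and $\Psi(v)\subset\Phi(u)$ for all $u,v\in\sigma$ with $u<v$. For every $v\in\sigma$ fix a contraction $H_v:\Phi(v)\times[0,1]\to\Psi(v)$ of $\Phi(v)$ into a point $p_v\in\Psi(v)$. Then there exists a unique continuous map $h:|\sigma|\to Y$ such that (i) $h(v)=p_v$ for every $v\in\sigma$; (ii) $h(tv+(1-t)z)=H_v(h(z),t)$ for all $z\in|\tau|$ and $t\in[0,1]$, whenever $\tau\subset\sigma$ is a nonempty face and $v\in\sigma$ satisfies $v<u$ for every $u\in\tau$.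
   Context: $|\sigma|$ denotes the geometric simplex (convex hull of the vertices of $\sigma$, taken linearly independent in a linear space), and $|\tau|\subset|\sigma|$ that of a face $\tau$; $tv+(1-t)z$ is the usual convex combination in $|\sigma|$. A contraction of $S\subset T$ into $p\in T$ is a continuous $H:S\times[0,1]\to T$ with $H(y,0)=y$, $H(y,1)=p$ for all $y\in S$; $\Phi(v)$ is contractible in $\Psi(v)$ if such a contraction into $\Psi(v)$ exists. *)

(* Defs.v *)
From Stdlib Require Import Reals Lra.
Open Scope R_scope.

Record TopSpace := {
  carrier :> Type;
  is_open : (carrier -> Prop) -> Prop;
  open_full : is_open (fun _ => True);
  open_inter : forall U V, is_open U -> is_open V -> is_open (fun x => U x /\ V x);
  open_union : forall F : (carrier -> Prop) -> Prop,
      (forall U, F U -> is_open U) -> is_open (fun x => exists U, F U /\ U x)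
}.

(* Geometric simplex |sigma| on vertices 0..n, in barycentric coordinates
   (x : nat -> R, with x i = 0 for i > n); vertex v is the point [vertex v]. *)
Definition in_simplex (n : nat) (x : nat -> R) : Prop :=
  (forall i, (i <= n)%nat -> 0 <= x i) /\
  (forall i, (n < i)%nat -> x i = 0) /\
  sum_f_R0 x n = 1.

Definition vertex (v : nat) : nat -> R :=
  fun i => if Nat.eqb i v then 1 else 0.

Definition in_face (n : nat) (tau : nat -> Prop) (z : nat -> R) : Prop :=
  in_simplex n z /\ (forall i, ~ tau i -> z i = 0).

Definition convex_comb (t : R) (v : nat) (z : nat -> R) : nat -> R :=
  fun i => t * vertex v i + (1 - t) * z i.

(* Continuity of h : |sigma| -> Y (|sigma| with its Euclidean topology,
   expressed via the max-distance of barycentric coordinates). *)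
Definition continuous_on_simplex (n : nat) (Y : TopSpace) (h : (nat -> R) -> Y) : Prop :=
  forall U : Y -> Prop, is_open Y U ->
  forall x, in_simplex n x -> U (h x) ->
  exists delta, 0 < delta /\
    forall y, in_simplex n y ->
      (forall i, (i <= n)%nat -> Rabs (y i - x i) < delta) -> U (h y).

(* Continuity of H : A x [0,1] -> Y, A a subspace of Y (product topology). *)
Definition continuous_on_prod (Y : TopSpace) (A : Y -> Prop) (H : Y -> R -> Y) : Prop :=
  forall y t, A y -> 0 <= t <= 1 ->
  forall U : Y -> Prop, is_open Y U -> U (H y t) ->
  exists W : Y -> Prop, is_open Y W /\ W y /\
  exists delta, 0 < delta /\
    forall y' t', W y' -> A y' -> 0 <= t' <= 1 -> Rabs (t' - t) < delta -> U (H y' t').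

Definition contraction_into (Y : TopSpace) (A B : Y -> Prop) (H : Y -> R -> Y) (p : Y) : Prop :=
  continuous_on_prod Y A H /\
  (forall y t, A y -> 0 <= t <= 1 -> B (H y t)) /\
  (forall y, A y -> H y 0 = y) /\
  (forall y, A y -> H y 1 = p).

Definition good_map (n : nat) (Y : TopSpace) (H : nat -> Y -> R -> Y) (p : nat -> Y)
    (h : (nat -> R) -> Y) : Prop :=
  continuous_on_simplex n Y h /\
  (forall v, (v <= n)%nat -> h (vertex v) = p v) /\
  (forall (tau : nat -> Prop) (v : nat),
      (forall u, tau u -> (u <= n)%nat) -> (exists u, tau u) ->
      (v <= n)%nat -> (forall u, tau u -> (v < u)%nat) ->
      forall z t, in_face n tau z -> 0 <= t <= 1 ->
      h (convex_comb t v z) = H v (h z) t).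

(* Main.v *)
Require Import Defs.
From Stdlib Require Import Reals.
From Stdlib Require Import Lra Lia Classical FunctionalExtensionality.
Open Scope R_scope.

Lemma UL1 (chi : R -> R -> Prop) :
  (forall s d d', chi s d -> 0 < d' <= d -> chi s d') ->
  (forall s, 0 <= s <= 1 -> exists e, 0 < e /\ exists d, 0 < d /\
      forall s', 0 <= s' <= 1 -> Rabs (s' - s) < e -> chi s' d) ->
  exists d, 0 < d /\ forall s, 0 <= s <= 1 -> chi s d.
Proof.
  intros mono loc.
  set (E := fun a => 0 <= a <= 1 /\ exists d, 0 < d /\ forall s, 0 <= s <= a -> chi s d).
  assert (E0 : E 0).
  { destruct (loc 0) as [e [he [d [hd Hd]]]]; [lra|].
    split; [lra|]. exists d; split; auto. intros s hs. apply Hd; [lra|].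
    replace (s - 0) with 0 by lra. rewrite Rabs_R0; lra. }
  assert (Eb : bound E). { exists 1. intros x [hx _]. lra. }
  destruct (completeness E Eb (ex_intro _ 0 E0)) as [m [Hub Hlub]].
  assert (m0 : 0 <= m) by (apply Hub; auto).
  assert (m1 : m <= 1). { apply Hlub. intros x [hx _]; lra. }
  destruct (loc m) as [e [he [dm [hdm Hdm]]]]; [lra|].
  assert (exists a, E a /\ m - e < a) as [a [[ha [da [hda Hda]]] hma]].
  { apply NNPP; intro C. assert (m <= m - e); [|lra].
    apply Hlub. intros x Ex. apply Rnot_lt_le. intro hx. apply C. exists x; auto. }
  set (b := Rmin 1 (m + e/2)).
  assert (Ebb : E b).
  { split. { unfold b, Rmin; destruct Rle_dec; lra. }
    exists (Rmin da dm). split. { unfold Rmin; destruct Rle_dec; lra. }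
    intros s hs. destruct (Rle_dec s a).
    - apply mono with da. apply Hda; lra. unfold Rmin; destruct Rle_dec; lra.
    - apply mono with dm. apply Hdm. unfold b, Rmin in hs; destruct Rle_dec; lra.
      apply Rabs_def1; unfold b, Rmin in hs; destruct Rle_dec; lra.
      unfold Rmin; destruct Rle_dec; lra. }
  assert (hbm : b <= m) by (apply Hub; auto).
  assert (b = 1) by (unfold b, Rmin in *; destruct Rle_dec; lra).
  destruct Ebb as [_ [d [hd Hd]]]. exists d; split; auto. intros s hs; apply Hd; lra.
Qed.

Definition cube (m:nat) (z:nat->R) := forall i, (i < m)%nat -> 0 <= z i <= 1.
Definition close (m:nat) (z z':nat->R) (e:R) := forall i, (i<m)%nat -> Rabs (z' i - z i) < e.

Lemma ULm (m : nat) : forall Phi0 : (nat->R) -> R -> Prop,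
  (forall z d d', Phi0 z d -> 0<d'<=d -> Phi0 z d') ->
  (forall z, cube m z -> exists e, 0<e /\ exists d, 0<d /\
      forall z', cube m z' -> close m z z' e -> Phi0 z' d) ->
  exists d, 0<d /\ forall z, cube m z -> Phi0 z d.
Proof.
  induction m as [|m IH]; intros Phi0 mono loc.
  - destruct (loc (fun _ => 0)) as [e [he [d [hd Hd]]]].
    { intros i hi; lia. }
    exists d; split; auto. intros z hz. apply Hd; auto. intros i hi; lia.
  - set (chi := fun s d => forall y, cube (S m) y -> Rabs (y m - s) < d -> Phi0 y d).
    destruct (UL1 chi) as [d [hd Hd]].
    + intros s d d' Hc hd' y hy hym. apply mono with d; [|lra]. apply Hc; auto; lra.
    + intros s hs.
      set (Psi0 := fun x d => forall y, cube (S m) y -> close m x y d ->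
                     Rabs (y m - s) < d -> Phi0 y d).
      destruct (IH Psi0) as [ds [hds Hds]].
      * intros x d d' Hp hd' y hy hxy hym. apply mono with d; [|lra].
        apply Hp; auto. intros i hi; specialize (hxy i hi); lra. lra.
      * intros x hx.
        set (z := fun i => if Nat.eqb i m then s else x i).
        destruct (loc z) as [ez [hez [dz [hdz Hdz]]]].
        { intros i hi. unfold z. destruct (Nat.eqb_spec i m); auto. apply hx; lia. }
        exists (ez/2). split; [lra|]. exists (Rmin (ez/2) dz).
        split; [unfold Rmin; destruct Rle_dec; lra|].
        intros x' hx' hxx' y hy hxy hym.
        apply mono with dz; [|unfold Rmin; destruct Rle_dec; lra].
        apply Hdz; auto. intros i hi. unfold z.
        destruct (Nat.eqb_spec i m).
        -- subst. unfold Rmin in hym; destruct Rle_dec; lra.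
        -- assert (i < m)%nat by lia.
           specialize (hxx' i H). specialize (hxy i H).
           replace (y i - x i) with ((y i - x' i) + (x' i - x i)) by lra.
           eapply Rle_lt_trans; [apply Rabs_triang|].
           unfold Rmin in hxy; destruct Rle_dec; lra.
      * exists (ds/2). split; [lra|]. exists (ds/2). split; [lra|].
        intros s' hs' hss' y hy hym.
        apply mono with ds; [|lra].
        apply (Hds y); auto. { intros i hi; apply hy; lia. }
        { intros i hi. rewrite Rminus_diag, Rabs_R0. lra. }
        replace (y m - s) with ((y m - s') + (s' - s)) by lra.
        eapply Rle_lt_trans; [apply Rabs_triang|]. lra.
    + exists d; split; auto. intros z hz. apply (Hd (z m)).
      apply hz; lia. exact hz. rewrite Rminus_diag, Rabs_R0; lra.
Qed.

Lemma sum_zero (f : nat -> R) N : (forall i, (i <= N)%nat -> f i = 0) -> sum_f_R0 f N = 0.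
Proof.
  induction N; intros Hf; simpl. apply Hf; lia.
  rewrite IHN by (intros; apply Hf; lia). rewrite Hf by lia. lra.
Qed.

Lemma sum_nonneg (f : nat -> R) N : (forall i, (i <= N)%nat -> 0 <= f i) -> 0 <= sum_f_R0 f N.
Proof.
  induction N; intros Hf; simpl. apply Hf; lia.
  specialize (IHN (fun i hi => Hf i ltac:(lia))). specialize (Hf (S N) ltac:(lia)). lra.
Qed.

Lemma sum_single_le (f : nat -> R) N j : (forall i, (i <= N)%nat -> 0 <= f i) ->
  (j <= N)%nat -> f j <= sum_f_R0 f N.
Proof.
  induction N; intros Hf hj; simpl.
  - replace j with 0%nat by lia. lra.
  - destruct (Nat.eq_dec j (S N)).
    + subst. pose proof (sum_nonneg f N (fun i hi => Hf i ltac:(lia))). lra.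
    + specialize (IHN (fun i hi => Hf i ltac:(lia)) ltac:(lia)).
      specialize (Hf (S N) ltac:(lia)). lra.
Qed.

Lemma sum_two_le (f : nat -> R) N j k : (forall i, (i <= N)%nat -> 0 <= f i) ->
  (j <= N)%nat -> (k <= N)%nat -> j <> k -> f j + f k <= sum_f_R0 f N.
Proof.
  induction N; intros Hf hj hk hjk; simpl.
  - lia.
  - assert (Hf' : forall i, (i <= N)%nat -> 0 <= f i) by (intros; apply Hf; lia).
    destruct (Nat.eq_dec j (S N)); [|destruct (Nat.eq_dec k (S N))].
    + subst. pose proof (sum_single_le f N k Hf' ltac:(lia)). lra.
    + subst. pose proof (sum_single_le f N j Hf' ltac:(lia)). lra.
    + specialize (IHN Hf' ltac:(lia) ltac:(lia) hjk). specialize (Hf (S N) ltac:(lia)). lra.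
Qed.

Lemma sum_drop (f : nat -> R) k e :
  sum_f_R0 (fun i => if Nat.leb i k then 0 else f i) (k + e) =
  sum_f_R0 f (k + e) - sum_f_R0 f k.
Proof.
  induction e.
  - rewrite Nat.add_0_r. rewrite (sum_zero (fun i => if Nat.leb i k then 0 else f i)). lra.
    intros i hi. destruct (Nat.leb_spec i k); [reflexivity|lia].
  - replace (k + S e)%nat with (S (k + e)) by lia.
    change (sum_f_R0 ?g (S (k+e))) with (sum_f_R0 g (k+e) + g (S (k+e))). rewrite IHe.
    destruct (Nat.leb_spec (S (k+e)) k); [lia|]. lra.
Qed.

Lemma sum_prefix (f : nat -> R) k : (forall i, (i < k)%nat -> f i = 0) -> sum_f_R0 f k = f k.
Proof.
  intros Hf. destruct k. reflexivity. simpl. rewrite sum_zero. lra.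
  intros; apply Hf; lia.
Qed.

Lemma sum_close (a b : nat -> R) N r : (forall i, (i <= N)%nat -> Rabs (a i - b i) < r) ->
  Rabs (sum_f_R0 a N - sum_f_R0 b N) < INR (S N) * r.
Proof.
  induction N; intros Hab.
  - simpl. specialize (Hab 0%nat ltac:(lia)). lra.
  - change (sum_f_R0 a (S N)) with (sum_f_R0 a N + a (S N)).
    change (sum_f_R0 b (S N)) with (sum_f_R0 b N + b (S N)).
    rewrite (S_INR (S N)).
    specialize (IHN (fun i hi => Hab i ltac:(lia))). specialize (Hab (S N) ltac:(lia)).
    replace (sum_f_R0 a N + a (S N) - (sum_f_R0 b N + b (S N))) with
      ((sum_f_R0 a N - sum_f_R0 b N) + (a (S N) - b (S N))) by lra.
    eapply Rle_lt_trans; [apply Rabs_triang|].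
    lra.
Qed.

Lemma sum_supp (f : nat -> R) N k : (k <= N)%nat -> (forall i, (i < k)%nat -> f i = 0) ->
  (forall i, (k < i)%nat -> (i <= N)%nat -> f i = 0) -> sum_f_R0 f N = f k.
Proof.
  intros hk h1 h2. replace N with (k + (N - k))%nat by lia.
  assert (E := sum_drop f k (N - k)).
  rewrite (sum_zero (fun i => if Nat.leb i k then 0 else f i)) in E.
  - rewrite (sum_prefix f k h1) in E. lra.
  - intros i hi. destruct (Nat.leb_spec i k); auto. apply h2; lia.
Qed.

Definition zz (k : nat) (x : nat -> R) : nat -> R :=
  fun i => if Nat.leb i k then 0 else x i / (1 - x k).

Fixpoint gg (Y : TopSpace) (n : nat) (H : nat -> Y -> R -> Y) (p : nat -> Y)
    (d : nat) (x : nat -> R) : Y :=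
  match d with
  | O => p n
  | S d' => if Req_EM_T (x (n - S d')%nat) 1 then p (n - S d')%nat
            else H (n - S d')%nat (gg Y n H p d' (zz (n - S d')%nat x)) (x (n - S d')%nat)
  end.

Definition Sk (n k : nat) (x : nat -> R) := in_simplex n x /\ forall i, (i < k)%nat -> x i = 0.

Lemma le1 n x : in_simplex n x -> forall i, (i <= n)%nat -> 0 <= x i <= 1.
Proof.
  intros [h1 [h2 h3]] i hi. split; auto. rewrite <- h3. apply sum_single_le; auto.
Qed.

Lemma zzS n k x : (k <= n)%nat -> Sk n k x -> x k <> 1 -> Sk n (S k) (zz k x).
Proof.
  intros hk [[h1 [h2 h3]] h4] hx1.
  assert (hxk : 0 <= x k < 1) by (pose proof (le1 n x (conj h1 (conj h2 h3)) k hk); lra).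
  split; [split; [|split]|].
  - intros i hi. unfold zz. destruct (Nat.leb i k); [lra|].
    unfold Rdiv. apply Rmult_le_pos; auto. left; apply Rinv_0_lt_compat; lra.
  - intros i hi. unfold zz. destruct (Nat.leb_spec i k); [lra|]. rewrite h2 by lia. unfold Rdiv; ring.
  - rewrite (sum_eq _ (fun i => (if Nat.leb i k then 0 else x i) * / (1 - x k))).
    + rewrite <- scal_sum. replace n with (k + (n - k))%nat by lia.
      rewrite sum_drop. rewrite (sum_prefix x k) by (intros; apply h4; lia).
      replace (k + (n - k))%nat with n by lia. rewrite h3. field. lra.
    + intros i hi. unfold zz. destruct (Nat.leb i k); unfold Rdiv; ring.
  - intros i hi. unfold zz. destruct (Nat.leb_spec i k); [lra|lia].
Qed.
Lemma est xi yi xk yk e d2 : 0 <= xi <= 1 -> 0 <= xk < 1 ->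
  Rabs (yi - xi) < e -> Rabs (yk - xk) < e -> e <= (1 - xk)/2 -> 4 * e <= d2 * (1-xk) * (1-xk) ->
  Rabs (yi / (1 - yk) - xi / (1 - xk)) < d2.
Proof.
  intros hxi hxk hi hk he hd.
  set (a := 1 - xk) in *. set (B := 1 - yk).
  assert (ha : 0 < a) by (unfold a; lra).
  pose proof (Rabs_def2 _ _ hi). pose proof (Rabs_def2 _ _ hk).
  assert (hB : a / 2 <= B) by (unfold B, a in *; lra).
  assert (hB0 : 0 < B) by lra.
  assert (eq : yi / B - xi / a = ((yi - xi) * a + xi * (yk - xk)) / (a * B)).
  { replace (yk - xk) with (a - B) by (unfold a, B; ring). field.
    split; apply Rgt_not_eq; lra. }
  assert (hnum : Rabs ((yi - xi) * a + xi * (yk - xk)) < 2 * e).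
  { eapply Rle_lt_trans; [apply Rabs_triang|]. rewrite !Rabs_mult.
    rewrite (Rabs_right a) by lra. rewrite (Rabs_right xi) by lra.
    assert (a <= 1) by (unfold a; lra).
    assert (Rabs (yi - xi) * a < e) by nra.
    assert (xi * Rabs (yk - xk) <= e) by (pose proof (Rabs_pos (yk - xk)); nra).
    lra. }
  fold B. rewrite eq. unfold Rdiv. rewrite Rabs_mult, Rabs_inv.
  rewrite (Rabs_right (a * B)) by nra.
  apply (Rmult_lt_reg_r (a * B)). nra.
  rewrite Rmult_assoc, Rinv_l by nra. rewrite Rmult_1_r.
  assert (0 < e). { pose proof (Rabs_pos (yi - xi)). lra. }
  assert (d2 * (a * a) <= 2 * d2 * (a * B)).
  { assert (0 < d2) by nra. nra. }
  nra.
Qed.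

Lemma gg_Psi (n : nat) (Y : TopSpace) (Phi Psi : nat -> Y -> Prop)
  (nested : forall u v, (u < v)%nat -> (v <= n)%nat -> forall y, Psi v y -> Phi u y)
  (H : nat -> Y -> R -> Y) (p : nat -> Y)
  (Hp : forall v, (v <= n)%nat -> Psi v (p v))
  (Hcontr : forall v, (v <= n)%nat -> contraction_into Y (Phi v) (Psi v) (H v) (p v)) :
  forall d, (d <= n)%nat -> forall x, Sk n (n-d) x -> Psi (n-d)%nat (gg Y n H p d x).
Proof.
  induction d; intros hd x hx.
  - simpl. rewrite Nat.sub_0_r. apply Hp; lia.
  - simpl gg. set (k := (n - S d)%nat) in *.
    destruct (Req_EM_T (x k) 1). apply Hp; lia.
    assert (hz : Sk n (n - d) (zz k x)).
    { replace (n - d)%nat with (S k) by lia. apply zzS; auto; lia. }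
    pose proof (IHd ltac:(lia) _ hz) as hP.
    destruct (Hcontr k ltac:(lia)) as [_ [Hr _]].
    apply Hr. apply (nested k (n - d)%nat); auto; lia.
    destruct hx as [hx _]. apply (le1 n x hx); lia.
Qed.

Lemma gg_B (n : nat) (Y : TopSpace) (Phi Psi : nat -> Y -> Prop)
  (nested : forall u v, (u < v)%nat -> (v <= n)%nat -> forall y, Psi v y -> Phi u y)
  (H : nat -> Y -> R -> Y) (p : nat -> Y)
  (Hp : forall v, (v <= n)%nat -> Psi v (p v))
  (Hcontr : forall v, (v <= n)%nat -> contraction_into Y (Phi v) (Psi v) (H v) (p v)) :
  forall e d, (d + e <= n)%nat -> forall x, Sk n (n-d) x -> gg Y n H p (d + e) x = gg Y n H p d x.
Proof.
  induction e; intros d hd x hx.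
  - rewrite Nat.add_0_r; reflexivity.
  - rewrite Nat.add_succ_r. simpl gg. set (k := (n - S (d + e))%nat).
    assert (hxk : x k = 0) by (apply (proj2 hx); unfold k; lia).
    destruct (Req_EM_T (x k) 1). lra.
    assert (hz : zz k x = x).
    { apply functional_extensionality; intro i. unfold zz.
      destruct (Nat.leb_spec i k). symmetry; apply (proj2 hx); unfold k in *; lia.
      rewrite hxk. field. }
    rewrite hz, hxk. rewrite IHe by (auto; lia).
    destruct (Hcontr k ltac:(unfold k; lia)) as [_ [_ [H0 _]]].
    apply H0. apply (nested k (n - d)%nat). unfold k; lia. lia.
    apply (gg_Psi n Y Phi Psi nested H p Hp Hcontr); auto; lia.
Qed.

Lemma gg_h (n : nat) (Y : TopSpace) (Phi Psi : nat -> Y -> Prop)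
  (nested : forall u v, (u < v)%nat -> (v <= n)%nat -> forall y, Psi v y -> Phi u y)
  (H : nat -> Y -> R -> Y) (p : nat -> Y)
  (Hp : forall v, (v <= n)%nat -> Psi v (p v))
  (Hcontr : forall v, (v <= n)%nat -> contraction_into Y (Phi v) (Psi v) (H v) (p v)) :
  forall k x, (k <= n)%nat -> Sk n k x ->
    gg Y n H p n x = gg Y n H p (n - k) x /\ Psi k (gg Y n H p n x).
Proof.
  intros k x hk hx.
  assert (hx' : Sk n (n - (n - k)) x) by (replace (n - (n - k))%nat with k by lia; auto).
  assert (E : gg Y n H p n x = gg Y n H p (n - k) x).
  { replace n with ((n - k) + k)%nat at 2 by lia.
    apply (gg_B n Y Phi Psi nested H p Hp Hcontr); auto; lia. }
  split; auto. rewrite E.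
  replace k with (n - (n - k))%nat at 1 by lia.
  apply (gg_Psi n Y Phi Psi nested H p Hp Hcontr); auto; lia.
Qed.

Lemma vertex_Sk n v : (v <= n)%nat -> Sk n v (vertex v).
Proof.
  intros hv. split; [split; [|split]|].
  - intros i _. unfold vertex; destruct (Nat.eqb i v); lra.
  - intros i hi. unfold vertex; destruct (Nat.eqb_spec i v); [lia|auto].
  - rewrite (sum_supp _ n v hv). unfold vertex; rewrite Nat.eqb_refl; auto.
    intros i hi; unfold vertex; destruct (Nat.eqb_spec i v); [lia|auto].
    intros i hi _; unfold vertex; destruct (Nat.eqb_spec i v); [lia|auto].
  - intros i hi; unfold vertex; destruct (Nat.eqb_spec i v); [lia|auto].
Qed.

Lemma gg_vertex (n : nat) (Y : TopSpace) (Phi Psi : nat -> Y -> Prop)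
  (nested : forall u v, (u < v)%nat -> (v <= n)%nat -> forall y, Psi v y -> Phi u y)
  (H : nat -> Y -> R -> Y) (p : nat -> Y)
  (Hp : forall v, (v <= n)%nat -> Psi v (p v))
  (Hcontr : forall v, (v <= n)%nat -> contraction_into Y (Phi v) (Psi v) (H v) (p v)) :
  forall v, (v <= n)%nat -> gg Y n H p n (vertex v) = p v.
Proof.
  intros v hv.
  destruct (gg_h n Y Phi Psi nested H p Hp Hcontr v (vertex v) hv (vertex_Sk n v hv)) as [E _].
  rewrite E. destruct (n - v)%nat eqn:Env.
  - simpl. f_equal; lia.
  - simpl gg. replace (n - S n0)%nat with v by lia.
    assert (vv : vertex v v = 1) by (unfold vertex; rewrite Nat.eqb_refl; auto).
    rewrite vv. destruct (Req_EM_T 1 1); [reflexivity|lra].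
Qed.

Lemma gg_ii (n : nat) (Y : TopSpace) (Phi Psi : nat -> Y -> Prop)
  (nested : forall u v, (u < v)%nat -> (v <= n)%nat -> forall y, Psi v y -> Phi u y)
  (H : nat -> Y -> R -> Y) (p : nat -> Y)
  (Hp : forall v, (v <= n)%nat -> Psi v (p v))
  (Hcontr : forall v, (v <= n)%nat -> contraction_into Y (Phi v) (Psi v) (H v) (p v)) :
  forall (tau : nat -> Prop) (v : nat),
      (forall u, tau u -> (u <= n)%nat) -> (exists u, tau u) ->
      (v <= n)%nat -> (forall u, tau u -> (v < u)%nat) ->
      forall z t, in_face n tau z -> 0 <= t <= 1 ->
      gg Y n H p n (convex_comb t v z) = H v (gg Y n H p n z) t.
Proof.
  intros tau v htau [u0 hu0] hv hlt z t [hz hzt] ht.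
  assert (hvn : (v < n)%nat) by (pose proof (htau u0 hu0); pose proof (hlt u0 hu0); lia).
  assert (zS : Sk n (S v) z).
  { split; auto. intros i hi. apply hzt. intro hti. pose proof (hlt i hti); lia. }
  assert (zv : forall i, (i <= v)%nat -> z i = 0) by (intros; apply (proj2 zS); lia).
  destruct (gg_h n Y Phi Psi nested H p Hp Hcontr (S v) z ltac:(lia) zS) as [Ez Pz].
  assert (Phz : Phi v (gg Y n H p n z)) by (apply (nested v (S v)); auto).
  destruct (Hcontr v hv) as [_ [_ [H0 H1]]].
  set (x := convex_comb t v z).
  assert (xS : Sk n v x).
  { destruct hz as [h1 [h2 h3]]. split; [split; [|split]|].
    - intros i hi. unfold x, convex_comb, vertex. destruct (Nat.eqb i v).
      specialize (h1 i hi); nra. specialize (h1 i hi); nra.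
    - intros i hi. unfold x, convex_comb, vertex. destruct (Nat.eqb_spec i v); [lia|].
      rewrite h2 by auto. ring.
    - unfold x, convex_comb. rewrite plus_sum.
      rewrite (sum_eq (fun i => t * vertex v i) (fun i => vertex v i * t)) by (intros; ring).
      rewrite (sum_eq (fun i => (1 - t) * z i) (fun i => z i * (1 - t))) by (intros; ring).
      rewrite <- !scal_sum. rewrite h3.
      destruct (vertex_Sk n v hv) as [[_ [_ hs]] _]. rewrite hs. ring.
    - intros i hi. unfold x, convex_comb, vertex. destruct (Nat.eqb_spec i v); [lia|].
      rewrite zv by lia. ring. }
  destruct (gg_h n Y Phi Psi nested H p Hp Hcontr v x hv xS) as [Ex _].
  rewrite Ex. replace (n - v)%nat with (S (n - S v)) by lia.
  simpl gg. replace (n - S (n - S v))%nat with v by lia.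
  assert (xv : x v = t).
  { unfold x, convex_comb, vertex. rewrite Nat.eqb_refl, zv by lia. ring. }
  rewrite xv. destruct (Req_EM_T t 1).
  - rewrite e, H1; auto.
  - assert (zx : zz v x = z).
    { apply functional_extensionality; intro i. unfold zz. rewrite xv.
      destruct (Nat.leb_spec i v). rewrite zv; auto.
      unfold x, convex_comb, vertex. destruct (Nat.eqb_spec i v); [lia|]. field. lra. }
    rewrite zx. rewrite <- Ez. reflexivity.
Qed.

Lemma Sk_vertex n k x : (k <= n)%nat -> Sk n k x -> x k = 1 -> x = vertex k.
Proof.
  intros hk [[h1 [h2 h3]] h4] hx. apply functional_extensionality; intro i.
  unfold vertex. destruct (Nat.eqb_spec i k). subst; auto.
  destruct (Nat.lt_ge_cases i k). apply h4; auto.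
  destruct (Nat.le_gt_cases i n).
  - pose proof (sum_two_le x n i k h1 H0 hk n0). pose proof (h1 i H0). lra.
  - apply h2; lia.
Qed.

Lemma x_comb n k x : Sk n k x -> x k <> 1 -> x = convex_comb (x k) k (zz k x).
Proof.
  intros [_ h4] hx. apply functional_extensionality; intro i.
  unfold convex_comb, vertex, zz.
  destruct (Nat.eqb_spec i k); [subst; destruct (Nat.leb_spec k k); [ring|lia]|].
  destruct (Nat.leb_spec i k).
  - rewrite h4 by lia. ring.
  - field. lra.
Qed.

Lemma gg_uniq (n : nat) (Y : TopSpace) (Phi Psi : nat -> Y -> Prop)
  (nested : forall u v, (u < v)%nat -> (v <= n)%nat -> forall y, Psi v y -> Phi u y)
  (H : nat -> Y -> R -> Y) (p : nat -> Y)
  (Hp : forall v, (v <= n)%nat -> Psi v (p v))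
  (Hcontr : forall v, (v <= n)%nat -> contraction_into Y (Phi v) (Psi v) (H v) (p v)) :
  forall h', good_map n Y H p h' ->
  forall d, (d <= n)%nat -> forall x, Sk n (n - d) x -> h' x = gg Y n H p n x.
Proof.
  intros h' [_ [hv hii]]. induction d; intros hd x hx.
  - rewrite Nat.sub_0_r in hx.
    assert (x n = 1).
    { destruct hx as [[h1 [h2 h3]] h4]. rewrite <- h3. symmetry. apply sum_supp; auto; lia. }
    rewrite (Sk_vertex n n x) by auto.
    rewrite hv by lia. symmetry; apply (gg_vertex n Y Phi Psi nested H p Hp Hcontr); lia.
  - set (k := (n - S d)%nat) in *.
    destruct (Req_EM_T (x k) 1).
    + rewrite (Sk_vertex n k x) by (auto; unfold k; lia).
      rewrite hv by (unfold k; lia). symmetry; apply (gg_vertex n Y Phi Psi nested H p Hp Hcontr); unfold k; lia.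
    + assert (zS : Sk n (S k) (zz k x)) by (apply zzS; auto; unfold k; lia).
      assert (hf : in_face n (fun u => (k < u <= n)%nat) (zz k x)).
      { split. apply zS. intros i hi. destruct (Nat.le_gt_cases i k).
        apply (proj2 zS); lia. apply (proj1 (proj2 (proj1 zS))). lia. }
      assert (ht : 0 <= x k <= 1) by (apply (le1 n x (proj1 hx)); unfold k; lia).
      rewrite (x_comb n k x hx n0).
      rewrite (hii (fun u => (k < u <= n)%nat) k) with (t := x k) by (auto; try (intros; lia);
         try (exists n; unfold k; lia); unfold k; lia).
      rewrite (gg_ii n Y Phi Psi nested H p Hp Hcontr (fun u => (k < u <= n)%nat) k)
        by (auto; try (intros; lia); try (exists n; unfold k; lia); unfold k; lia).
      f_equal. apply IHd. lia. replace (n - d)%nat with (S k) by (unfold k; lia). auto.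
Qed.

Lemma gg_step (n : nat) (Y : TopSpace) (Phi Psi : nat -> Y -> Prop)
  (nested : forall u v, (u < v)%nat -> (v <= n)%nat -> forall y, Psi v y -> Phi u y)
  (H : nat -> Y -> R -> Y) (p : nat -> Y)
  (Hp : forall v, (v <= n)%nat -> Psi v (p v))
  (Hcontr : forall v, (v <= n)%nat -> contraction_into Y (Phi v) (Psi v) (H v) (p v)) :
  forall k y, (k < n)%nat -> Sk n k y -> y k <> 1 ->
    gg Y n H p n y = H k (gg Y n H p n (zz k y)) (y k).
Proof.
  intros k y hk hy hy1.
  destruct (gg_h n Y Phi Psi nested H p Hp Hcontr k y ltac:(lia) hy) as [E _].
  rewrite E. replace (n - k)%nat with (S (n - S k)) by lia. simpl gg.
  replace (n - S (n - S k))%nat with k by lia.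
  destruct (Req_EM_T (y k) 1); [contradiction|].
  f_equal. symmetry. apply (gg_h n Y Phi Psi nested H p Hp Hcontr (S k)); auto.
  apply zzS; auto; lia.
Qed.

Lemma gg_one (n : nat) (Y : TopSpace) (Phi Psi : nat -> Y -> Prop)
  (nested : forall u v, (u < v)%nat -> (v <= n)%nat -> forall y, Psi v y -> Phi u y)
  (H : nat -> Y -> R -> Y) (p : nat -> Y)
  (Hp : forall v, (v <= n)%nat -> Psi v (p v))
  (Hcontr : forall v, (v <= n)%nat -> contraction_into Y (Phi v) (Psi v) (H v) (p v)) :
  forall k y, (k <= n)%nat -> Sk n k y -> y k = 1 -> gg Y n H p n y = p k.
Proof.
  intros k y hk hy hy1. rewrite (Sk_vertex n k y hk hy hy1).
  apply (gg_vertex n Y Phi Psi nested H p Hp Hcontr); auto.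
Qed.

Lemma gg_cont (n : nat) (Y : TopSpace) (Phi Psi : nat -> Y -> Prop)
  (nested : forall u v, (u < v)%nat -> (v <= n)%nat -> forall y, Psi v y -> Phi u y)
  (H : nat -> Y -> R -> Y) (p : nat -> Y)
  (Hp : forall v, (v <= n)%nat -> Psi v (p v))
  (Hcontr : forall v, (v <= n)%nat -> contraction_into Y (Phi v) (Psi v) (H v) (p v)) :
  forall d, (d <= n)%nat -> forall x, Sk n (n-d) x -> forall U, is_open Y U -> U (gg Y n H p n x) ->
  exists delta, 0 < delta /\ forall y, Sk n (n-d) y ->
    (forall i, (i <= n)%nat -> Rabs (y i - x i) < delta) -> U (gg Y n H p n y).
Proof.
  induction d; intros hd x hx U hU hUx.
  - rewrite Nat.sub_0_r in *. exists 1. split; [lra|]. intros y hy _.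
    assert (E1 : forall w, Sk n n w -> gg Y n H p n w = p n).
    { intros w hw. apply (gg_one n Y Phi Psi nested H p Hp Hcontr); auto.
      destruct hw as [[h1 [h2 h3]] h4]. rewrite <- h3. symmetry. apply sum_supp; auto; lia. }
    rewrite E1 in *; auto.
  - set (k := (n - S d)%nat) in *.
    assert (hnd : (n - d)%nat = S k) by (unfold k; lia).
    specialize (IHd ltac:(lia)). rewrite hnd in IHd.
    assert (hkn : (k < n)%nat) by (unfold k; lia).
    destruct (Hcontr k ltac:(lia)) as [Hc [Hr [H0 H1]]].
    assert (PhiS : forall z, Sk n (S k) z -> Phi k (gg Y n H p n z)).
    { intros z hz. apply (nested k (S k)); [lia|lia|].
      apply (gg_h n Y Phi Psi nested H p Hp Hcontr (S k) z); auto. }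
    assert (hxk : 0 <= x k <= 1) by (apply (le1 n x (proj1 hx)); lia).
    destruct (Req_EM_T (x k) 1) as [ex1|ex1].
    + rewrite (gg_one n Y Phi Psi nested H p Hp Hcontr k x) in hUx by (auto; lia).
      assert (Unif : exists d0, 0 < d0 /\ forall z, Sk n (S k) z -> forall t, 1 - d0 < t -> t <= 1 ->
                 U (H k (gg Y n H p n z) t)).
      { set (Phi0 := fun z dl => forall z', Sk n (S k) z' ->
              (forall i, (i <= n)%nat -> Rabs (z' i - z i) < dl) ->
              forall t, 1 - dl < t -> t <= 1 -> U (H k (gg Y n H p n z') t)).
        destruct (ULm (S n) Phi0) as [d0 [hd0 Hd0]].
        - intros z dl dl' hP hdl z' hz' hc t ht1 ht2. apply hP; auto; [|lra].
          intros i hi; specialize (hc i hi); lra.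
        - intros z hz.
          destruct (classic (exists r, 0 < r /\ forall z', Sk n (S k) z' ->
                      ~ (forall i, (i <= n)%nat -> Rabs (z' i - z i) < r))) as [[r [hr Hr']]|Hno].
          + exists (r/2). split; [lra|]. exists (r/2). split; [lra|].
            intros z'' hz'' hc z' hz' hc' t _ _. exfalso. apply (Hr' z' hz').
            intros i hi. specialize (hc i ltac:(lia)). specialize (hc' i hi).
            replace (z' i - z i) with ((z' i - z'' i) + (z'' i - z i)) by ring.
            eapply Rle_lt_trans; [apply Rabs_triang|]. lra.
          + assert (Hnear : forall r, 0 < r -> exists z', Sk n (S k) z' /\
                      forall i, (i <= n)%nat -> Rabs (z' i - z i) < r).
            { intros r hr. apply NNPP; intro C. apply Hno. exists r; split; auto.
              intros z' hz' hc. apply C. exists z'; auto. }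
            set (zs := fun i => if Nat.leb i n then z i else 0).
            assert (hzs : Sk n (S k) zs).
            { split; [split; [|split]|].
              - intros i hi. unfold zs. destruct (Nat.leb_spec i n); [|lia].
                apply Rnot_lt_le; intro hneg.
                destruct (Hnear (- z i)) as [z' [hz' hc]]; [lra|].
                specialize (hc i hi). pose proof ((proj1 (proj1 hz')) i hi).
                apply Rabs_def2 in hc. lra.
              - intros i hi. unfold zs. destruct (Nat.leb_spec i n); [lia|auto].
              - rewrite (sum_eq zs z) by (intros i hi; unfold zs; destruct (Nat.leb_spec i n); [auto|lia]).
                destruct (Req_EM_T (sum_f_R0 z n) 1) as [e|ne]; auto. exfalso.
                assert (hpos : 0 < INR (S n)) by (apply lt_0_INR; lia).
                destruct (Hnear (Rabs (sum_f_R0 z n - 1) / INR (S n))) as [z' [hz' hc]].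
                { apply Rdiv_lt_0_compat; auto. apply Rabs_pos_lt. intro; apply ne; lra. }
                pose proof (sum_close z' z n _ hc) as hs.
                rewrite (proj2 (proj2 (proj1 hz'))) in hs.
                replace (INR (S n) * (Rabs (sum_f_R0 z n - 1) / INR (S n))) with
                  (Rabs (sum_f_R0 z n - 1)) in hs by (field; lra).
                rewrite Rabs_minus_sym in hs. lra.
              - intros i hi. unfold zs. destruct (Nat.leb_spec i n); [|auto].
                destruct (Req_EM_T (z i) 0) as [e|ne]; auto. exfalso.
                destruct (Hnear (Rabs (z i))) as [z' [hz' hc]]. apply Rabs_pos_lt; auto.
                specialize (hc i H2). rewrite (proj2 hz' i hi) in hc.
                rewrite Rminus_0_l, Rabs_Ropp in hc. lra. }
            assert (hU1 : U (H k (gg Y n H p n zs) 1)) by (rewrite H1; auto).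
            destruct (Hc (gg Y n H p n zs) 1 (PhiS zs hzs) ltac:(lra) U hU hU1)
              as [W [hW [hWz [d1 [hd1 Hd1]]]]].
            destruct (IHd zs hzs W hW hWz) as [d2 [hd2 Hd2]].
            exists (d2/2). split; [lra|]. exists (Rmin 1 (Rmin d1 (d2/2))).
            split; [unfold Rmin; repeat destruct Rle_dec; lra|].
            intros z'' hz'' hc z' hz' hc' t ht1 ht2.
            assert (hm1 : Rmin 1 (Rmin d1 (d2/2)) <= 1) by (unfold Rmin; repeat destruct Rle_dec; lra).
            assert (hm2 : Rmin 1 (Rmin d1 (d2/2)) <= d1) by (unfold Rmin; repeat destruct Rle_dec; lra).
            assert (hm3 : Rmin 1 (Rmin d1 (d2/2)) <= d2/2) by (unfold Rmin; repeat destruct Rle_dec; lra).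
            apply Hd1.
            * apply Hd2; auto. intros i hi. unfold zs. destruct (Nat.leb_spec i n); [|lia].
              specialize (hc i ltac:(lia)). specialize (hc' i hi).
              replace (z' i - z i) with ((z' i - z'' i) + (z'' i - z i)) by ring.
              eapply Rle_lt_trans; [apply Rabs_triang|]. lra.
            * apply PhiS; auto.
            * lra.
            * apply Rabs_def1; lra.
        - exists d0. split; auto. intros z hz t ht1 ht2. apply (Hd0 z); auto.
          + intros i hi. apply (le1 n z (proj1 hz)). lia.
          + intros i hi. rewrite Rminus_diag, Rabs_R0. lra. }
      destruct Unif as [d0 [hd0 Hd0]]. exists d0. split; auto.
      intros y hy hyx.
      destruct (Req_EM_T (y k) 1) as [ey|ey].
      * rewrite (gg_one n Y Phi Psi nested H p Hp Hcontr k y) by (auto; lia). auto.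
      * rewrite (gg_step n Y Phi Psi nested H p Hp Hcontr k y) by auto.
        apply Hd0. apply zzS; auto; lia.
        specialize (hyx k ltac:(lia)). rewrite ex1 in hyx. apply Rabs_def2 in hyx. lra.
        apply (le1 n y (proj1 hy)); lia.
    + rewrite (gg_step n Y Phi Psi nested H p Hp Hcontr k x) in hUx by auto.
      set (zx := zz k x) in *.
      assert (hzx : Sk n (S k) zx) by (apply zzS; auto; lia).
      set (a := 1 - x k).
      assert (ha : 0 < a) by (unfold a; lra).
      destruct (Hc (gg Y n H p n zx) (x k) (PhiS zx hzx) hxk U hU hUx)
        as [W [hW [hWz [d1 [hd1 Hd1]]]]].
      destruct (IHd zx hzx W hW hWz) as [d2 [hd2 Hd2]].
      set (e := Rmin (a/2) (Rmin d1 (d2 * a * a / 4))).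
      pose proof (Rmult_lt_0_compat _ _ (Rmult_lt_0_compat _ _ hd2 ha) ha) as hdd.
      assert (he0 : 0 < e) by (unfold e, Rmin; repeat destruct Rle_dec; lra).
      assert (he1 : e <= a/2) by (unfold e, Rmin; repeat destruct Rle_dec; lra).
      assert (he2 : e <= d1) by (unfold e, Rmin; repeat destruct Rle_dec; lra).
      assert (he3 : e <= d2 * a * a / 4) by (unfold e, Rmin; repeat destruct Rle_dec; lra).
      exists e. split; auto. intros y hy hyx.
      assert (hyk : Rabs (y k - x k) < e) by (apply hyx; lia).
      assert (ey : y k <> 1) by (apply Rabs_def2 in hyk; unfold a in *; intro; lra).
      rewrite (gg_step n Y Phi Psi nested H p Hp Hcontr k y) by auto.
      apply Hd1.
      * apply Hd2. apply zzS; auto; lia.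
        intros i hi. unfold zz, zx, zz. destruct (Nat.leb i k).
        rewrite Rminus_diag, Rabs_R0; auto.
        apply est with e; [apply (le1 n x (proj1 hx)); auto | unfold a in *; lra
          | apply hyx; auto | auto | unfold a in *; lra | unfold a in *; lra].
      * apply PhiS. apply zzS; auto; lia.
      * apply (le1 n y (proj1 hy)); lia.
      * lra.
Qed.

Theorem proposition3p3 (n : nat) (Y : TopSpace)
  (Phi Psi : nat -> Y -> Prop)
  (Phi_ne : forall v, (v <= n)%nat -> exists y, Phi v y)
  (Psi_ne : forall v, (v <= n)%nat -> exists y, Psi v y)
  (nested : forall u v, (u < v)%nat -> (v <= n)%nat -> forall y, Psi v y -> Phi u y)
  (H : nat -> Y -> R -> Y) (p : nat -> Y)
  (Hp : forall v, (v <= n)%nat -> Psi v (p v))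
  (Hcontr : forall v, (v <= n)%nat -> contraction_into Y (Phi v) (Psi v) (H v) (p v)) :
  exists h : (nat -> R) -> Y,
    good_map n Y H p h /\
    (forall h' : (nat -> R) -> Y, good_map n Y H p h' ->
       forall x, in_simplex n x -> h' x = h x).
Proof.
  assert (S0 : forall x, in_simplex n x -> Sk n (n - n) x).
  { intros x hx. rewrite Nat.sub_diag. split; auto. intros; lia. }
  exists (gg Y n H p n). split; [split; [|split]|].
  - intros U hU x hx hUx.
    destruct (gg_cont n Y Phi Psi nested H p Hp Hcontr n (le_n n) x (S0 x hx) U hU hUx)
      as [dl [hdl Hdl]].
    exists dl. split; auto.
  - apply (gg_vertex n Y Phi Psi nested H p Hp Hcontr).
  - apply (gg_ii n Y Phi Psi nested H p Hp Hcontr).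
  - intros h' hg x hx. apply (gg_uniq n Y Phi Psi nested H p Hp Hcontr h' hg n); auto.
Qed.
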